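(* Let $S$ be a free solvable group of finite rank $r$ (free in the variety of solvable groups of some fixed derived length $d$), and let $H=\langle h\rangle$ be the cyclic subgroup generated by a nontrivial element $h\in S$. Then the following are equivalent: (1) $H$ is verbally closed in $S$; (2) $H$ is a retract of $S$; (3) the image of $h$ in the abelianization $A_r=S/S'$ (a free abelian group of rank $r$) is primitive.
   Context: An element of a free abelian group of finite rank is primitive if it belongs to some basis of that group. A subgroup $H$ of a group $G$ is a retract if there is a homomorphism $\phi:G\to H$ that restricts to the identity on $H$. Let $F(X)$ be the free group on a countably infinite set $X=\{x_1,x_2,\dots\}$. A subgroup $H\le G$ is verbally closed if for every $w=w(x_1,\dots,x_n)\in F(X)$ and every $h\in H$, the equation $w(x_1,\dots,x_n)=h$ has a solution in $G$ if and only if it has a solution in $H$. *)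

(* Defs.v *)
From HB Require Import structures.
From mathcomp Require Import all_boot all_order all_algebra.
Set Implicit Arguments. Unset Strict Implicit. Unset Printing Implicit Defensive.
Import GRing.Theory.
Local Open Scope ring_scope.

Record Grp := {
  gcar :> Type;
  gmul : gcar -> gcar -> gcar;
  ginv : gcar -> gcar;
  gone : gcar;
  gmulA : forall a b c, gmul a (gmul b c) = gmul (gmul a b) c;
  gmul1 : forall a, gmul gone a = a;
  gmulV : forall a, gmul (ginv a) a = gone
}.

Definition is_hom (G K : Grp) (f : G -> K) : Prop :=
  forall a b, f (gmul a b) = gmul (f a) (f b).

Definition gcomm (G : Grp) (a b : G) : G :=
  gmul (gmul (ginv a) (ginv b)) (gmul a b).

Fixpoint gnpow (G : Grp) (h : G) (n : nat) : G :=
  match n with O => gone G | S n => gmul h (gnpow h n) end.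
Definition gzpow (G : Grp) (h : G) (z : int) : G :=
  match z with Posz n => gnpow h n | Negz n => ginv (gnpow h n.+1) end.

(* G^(0) = G, G^(k+1) = subgroup generated by commutators of elements of
   G^(k) (= set of finite products of such commutators, as the inverse of a
   commutator is a commutator). *)
Inductive in_derived (G : Grp) : nat -> G -> Prop :=
| der0 (g : G) : in_derived 0 g
| der_one (k : nat) : in_derived k.+1 (gone G)
| der_comm (k : nat) (a b g : G) :
    in_derived k a -> in_derived k b -> in_derived k.+1 g ->
    in_derived k.+1 (gmul g (gcomm a b)).

Definition solvable_of_length (G : Grp) (d : nat) : Prop :=
  forall g : G, in_derived d g -> g = gone G.

Definition free_solvable (S : Grp) (d r : nat) (x : 'I_r -> S) : Prop :=
  solvable_of_length S d /\
  forall (G : Grp), solvable_of_length G d ->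
    forall f : 'I_r -> G,
      exists! phi : S -> G, is_hom phi /\ forall i, phi (x i) = f i.

(* Group words: elements of the free group F(X), X = {x_0, x_1, ...},
   represented by terms. *)
Inductive word : Type :=
| wvar of nat
| wone
| wmul of word & word
| winv of word.

Fixpoint weval (G : Grp) (a : nat -> G) (w : word) : G :=
  match w with
  | wvar n => a n
  | wone => gone G
  | wmul u v => gmul (weval a u) (weval a v)
  | winv u => ginv (weval a u)
  end.

(* H (given as a predicate, assumed to be a subgroup) is verbally closed. *)
Definition verbally_closed (G : Grp) (H : G -> Prop) : Prop :=
  forall (w : word) (h : G), H h ->
    ((exists a : nat -> G, weval a w = h) <->
     (exists a : nat -> G, (forall n, H (a n)) /\ weval a w = h)).

Definition retract (G : Grp) (H : G -> Prop) : Prop :=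
  exists phi : G -> G, is_hom phi /\ (forall g, H (phi g)) /\
                       (forall g, H g -> phi g = g).

Definition cyclic_sub (G : Grp) (h : G) : G -> Prop :=
  fun g => exists z : int, g = gzpow h z.

Definition zbasis (r : nat) (s : seq 'rV[int]_r) : Prop :=
  forall u : 'rV[int]_r,
    exists! c : 'I_(size s) -> int, u = \sum_(i < size s) c i *: s`_i.

Definition primitive (r : nat) (v : 'rV[int]_r) : Prop :=
  exists s : seq 'rV[int]_r, zbasis s /\ v \in s.

(* Main.v *)
Require Import Defs.
From mathcomp Require Import all_boot all_order all_algebra zify.
Set Implicit Arguments. Unset Strict Implicit. Unset Printing Implicit Defensive.
Import GRing.Theory.
Local Open Scope ring_scope.

Section G.
Variable G : Grp.
Implicit Types a b c : G.

Lemma mulgV' a : gmul a (ginv a) = gone G.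
Proof.
have e := gmulV (ginv a).
rewrite -[gmul a _]gmul1 -{1}e -gmulA (gmulA (ginv a) a) gmulV gmul1. exact: e.
Qed.

Lemma mulg1' a : gmul a (gone G) = a.
Proof. by rewrite -(gmulV a) gmulA mulgV' gmul1. Qed.

Lemma mulgI a b c : gmul a b = gmul a c -> b = c.
Proof. by move=> e; rewrite -(gmul1 b) -(gmul1 c) -(gmulV a) -!gmulA e. Qed.

Lemma invg_uniq a b : gmul a b = gone G -> b = ginv a.
Proof. by move=> e; apply: (@mulgI a); rewrite e mulgV'. Qed.

Lemma invgM a b : ginv (gmul a b) = gmul (ginv b) (ginv a).
Proof.
symmetry; apply: invg_uniq.
by rewrite -gmulA (gmulA b) mulgV' gmul1 mulgV'.
Qed.

Lemma invgK a : ginv (ginv a) = a.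
Proof. by symmetry; apply: invg_uniq; rewrite gmulV. Qed.

Lemma gnpowS_r a n : gnpow a n.+1 = gmul (gnpow a n) a.
Proof.
elim: n => [|n IH]; first by rewrite /= mulg1' gmul1.
change (gmul a (gnpow a n.+1) = gmul (gmul a (gnpow a n)) a).
by rewrite IH gmulA.
Qed.

Lemma gzpowS a z : gzpow a (z + 1) = gmul a (gzpow a z).
Proof.
case: z => [n|n].
  by have -> : Posz n + 1 = Posz n.+1 by lia.
case: n => [|n].
  have -> : Negz 0 + 1 = 0 by [].
  by rewrite /= mulg1' mulgV'.
have -> : Negz n.+1 + 1 = Negz n by rewrite !NegzE; lia.
rewrite /=. set g := gnpow a n.
have -> : gmul a (gmul a g) = gmul (gmul a g) a by rewrite -[gmul a g]/(gnpow a n.+1) -gnpowS_r.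
by rewrite [in RHS]invgM gmulA mulgV' gmul1.
Qed.

Lemma gzpowP a z : gzpow a (z - 1) = gmul (ginv a) (gzpow a z).
Proof.
apply: (@mulgI a); rewrite gmulA mulgV' gmul1 -gzpowS.
by rewrite subrK.
Qed.

Lemma int_ind3 (P : int -> Prop) : P 0 -> (forall z, P z -> P (z + 1)) ->
  (forall z, P z -> P (z - 1)) -> forall z, P z.
Proof.
move=> P0 Pu Pd [n|n].
  elim: n => // n IH; have -> : Posz n.+1 = n%:Z + 1 by lia.
  exact: Pu.
elim: n => [|n IH]; first by have := Pd 0 P0.
have -> : Negz n.+1 = Negz n - 1 by rewrite !NegzE; lia.
exact: Pd.
Qed.

Lemma gzpowD a x y : gzpow a (x + y) = gmul (gzpow a x) (gzpow a y).
Proof.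
elim/int_ind3: x => [|x IH|x IH]; first by rewrite add0r /= gmul1.
  by rewrite addrAC gzpowS IH gzpowS gmulA.
by rewrite addrAC gzpowP IH gzpowP gmulA.
Qed.

Lemma gzpow_comm a x y : gmul (gzpow a x) (gzpow a y) = gmul (gzpow a y) (gzpow a x).
Proof. by rewrite -!gzpowD addrC. Qed.

Lemma gcomm1 a b : gmul a b = gmul b a -> gcomm a b = gone G.
Proof.
move=> e; rewrite /gcomm e -gmulA (gmulA (ginv b)) gmulV gmul1 gmulV //.
Qed.

End G.

Section Hom.
Variables G K : Grp.
Variable f : G -> K.
Hypothesis hf : is_hom f.
Lemma hom1 : f (gone G) = gone K.
Proof.
apply: (@mulgI _ (f (gone G))); by rewrite -hf !mulg1'.
Qed.
Lemma homV a : f (ginv a) = ginv (f a).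
Proof. apply: invg_uniq; by rewrite -hf mulgV' hom1. Qed.
Lemma hom_weval (a : nat -> G) w : f (weval a w) = weval (fun n => f (a n)) w.
Proof. elim: w => //= [|u IHu v IHv|u IHu]; by rewrite ?hom1 ?hf ?homV ?IHu ?IHv. Qed.
End Hom.
Definition wcomm (u v : word) := wmul (wmul (winv u) (winv v)) (wmul u v).
Fixpoint cw (n : nat) : word :=
  match n with O => wone | S m => wmul (cw m) (wcomm (wvar (m.*2.+1)) (wvar (m.*2.+2))) end.
Fixpoint wnpow (u : word) (n : nat) : word :=
  match n with O => wone | S m => wmul u (wnpow u m) end.
Definition wzpow (u : word) (k : int) : word :=
  match k with Posz n => wnpow u n | Negz n => winv (wnpow u n.+1) end.

Lemma weval_zpow (G : Grp) (a : nat -> G) u k :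
  weval a (wzpow u k) = gzpow (weval a u) k.
Proof.
have E n : weval a (wnpow u n) = gnpow (weval a u) n by elim: n => //= n ->.
by case: k => n /=; rewrite E.
Qed.

Lemma cw_local (G : Grp) n (a b : nat -> G) :
  (forall i, (0 < i < n.*2.+1)%N -> a i = b i) -> weval a (cw n) = weval b (cw n).
Proof.
elim: n => //= n IH E.
rewrite IH; last by move=> i Hi; apply: E; lia.
by rewrite /= !E //; lia.
Qed.

Lemma derived1_cw (G : Grp) (g : G) : in_derived 1 g ->
  exists n (a : nat -> G), weval a (cw n) = g.
Proof.
move=> D; have : (1 = 1)%N by []; move: D; move: {1 3}1%N => k D.
elim: D => [g0|k0|k0 a b g0 _ _ _ _ _ IH] Ek //.
  by exists 0%N, (fun _ => gone G).
case: (IH Ek) => n [a' Ha'].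
exists n.+1, (fun i => if i == n.*2.+1 then a else if i == n.*2.+2 then b else a' i).
rewrite /= -Ha' eqxx ifN; last by lia.
rewrite eqxx; congr gmul; apply: cw_local => i Hi.
by rewrite ifN; [rewrite ifN //|]; lia.
Qed.

Lemma cw_cyc (G : Grp) (h : G) n (a : nat -> G) :
  (forall i, cyclic_sub h (a i)) -> weval a (cw n) = gone G.
Proof.
move=> Ha; elim: n => //= n ->.
rewrite gmul1; case: (Ha n.*2.+1) => x ->; case: (Ha n.*2.+2) => y ->.
exact/gcomm1/gzpow_comm.
Qed.
Definition Nprop r (v : 'rV[int]_r) := forall k w, v = k *: w -> k = 1 \/ k = -1.
Definition P1prop r (v : 'rV[int]_r) := exists psi : 'rV[int]_r -> int,
  (forall a b, psi (a + b) = psi a + psi b) /\ psi v = 1.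

Section Grp.
Variables (r : nat) (S : Grp) (ab : S -> 'rV[int]_r).
Hypothesis ab_hom : forall a b : S, ab (gmul a b) = ab a + ab b.

Lemma ab1 : ab (gone S) = 0.
Proof. by apply: (addrI (ab (gone S))); rewrite addr0 -ab_hom gmul1. Qed.

Lemma abV a : ab (ginv a) = - ab a.
Proof. by apply/eqP; rewrite -addr_eq0 -ab_hom gmulV ab1. Qed.

Lemma ab_zpow g k : ab (gzpow g k) = k *: ab g.
Proof.
elim/int_ind3: k => [|k IH|k IH]; first by rewrite scale0r ab1.
  by rewrite gzpowS ab_hom IH scalerDl scale1r addrC.
by rewrite gzpowP ab_hom IH abV scalerBl scale1r addrC.
Qed.

Lemma psi_scale (psi : 'rV[int]_r -> int) :
  (forall a b, psi (a + b) = psi a + psi b) -> forall z v, psi (z *: v) = z * psi v.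
Proof.
move=> Hp z v.
have p0 : psi 0 = 0 by apply: (addrI (psi 0)); rewrite addr0 -Hp addr0.
have pN u : psi (- u) = - psi u by apply/eqP; rewrite -addr_eq0 -Hp addNr p0.
elim/int_ind3: z => [|z IH|z IH]; first by rewrite scale0r p0 mul0r.
  by rewrite scalerDl scale1r Hp IH mulrDl mul1r.
by rewrite scalerBl scale1r Hp pN IH mulrBl mul1r.
Qed.

Variable h : S.

Lemma P1R : P1prop (ab h) -> retract (cyclic_sub h).
Proof.
case=> psi [Hp Hv].
exists (fun g => gzpow h (psi (ab g))); split; last split.
- by move=> a b; rewrite ab_hom Hp gzpowD.
- by move=> g; exists (psi (ab g)).
- by move=> g [z ->]; rewrite ab_zpow psi_scale // Hv mulr1.
Qed.

Lemma RVC : retract (cyclic_sub h) -> verbally_closed (cyclic_sub h).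
Proof.
case=> phi [Hphi [Himg Hfix]] w h' Hh'; split; last first.
  by case=> a [_ e]; exists a.
case=> a e; exists (fun n => phi (a n)); split => //.
by rewrite -hom_weval // e Hfix.
Qed.

Hypothesis ab_surj : forall v : 'rV[int]_r, exists g : S, ab g = v.
Hypothesis ab_ker : forall g : S, ab g = 0 <-> in_derived 1 g.
Hypothesis hnt : h <> gone S.

Lemma VCN : verbally_closed (cyclic_sub h) -> Nprop (ab h).
Proof.
move=> VC.
suff M : forall k w, ab h = k *: w -> (k = 0 \/ ab h != 0) -> k = 1 \/ k = -1.
  move=> k w e; have [z0|nz] := eqVneq (ab h) 0.
    have := M 0 0; rewrite scale0r => /(_ z0 (or_introl erefl)); by case.
  by apply: (M k w e); right.
move=> k w e kv.
have [k1|k1] := eqVneq k 1; first by left.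
have [k2|k2] := eqVneq k (-1); first by right.
exfalso.
case: (ab_surj w) => g eg.
set c := gmul h (ginv (gzpow g k)).
have : in_derived 1 c.
  by apply/ab_ker; rewrite /c ab_hom abV ab_zpow eg -e subrr.
case/derived1_cw => n [a' Ha'].
set W := wmul (cw n) (wzpow (wvar 0) k).
have hH : cyclic_sub h h by exists 1; rewrite /= mulg1'.
have := VC W h hH; case=> /(_ _) [].
  exists (fun i => if i == 0%N then g else a' i).
  rewrite /W /= weval_zpow /= (@cw_local _ n _ a'); last first.
    by move=> i Hi; rewrite ifN //; lia.
  by rewrite Ha' /c -gmulA gmulV mulg1'.
move=> a [Ha]; rewrite /W /= weval_zpow /= (cw_cyc _ Ha) gmul1.
case: (Ha 0%N) => z -> E _.
case: kv => [k0|nz].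
  by apply: hnt; rewrite -E k0.
have := congr1 ab E; rewrite !ab_zpow scalerA => /eqP.
rewrite eq_sym -subr_eq0 -{1}[ab h]scale1r -scalerBl scalemx_eq0 (negPf nz) orbF subr_eq0.
rewrite mulrC => /eqP/esym/intUnitRing.unitzPl; rewrite /intUnitRing.unitz qualifE /=.
by rewrite (negPf k1) (negPf k2).
Qed.
End Grp.
From Stdlib Require Import ClassicalEpsilon FunctionalExtensionality.
Lemma P0P1 r (v : 'rV[int]_r) : primitive v -> P1prop v.
Proof.
case=> s [Hb vs].
have U u (c1 c2 : 'I_(size s) -> int) : u = \sum_i c1 i *: s`_i ->
    u = \sum_i c2 i *: s`_i -> c1 = c2.
  case: (Hb u) => c [_ Uc] e1 e2.
  by rewrite -(Uc _ e1) -(Uc _ e2).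
have ex u : {c : 'I_(size s) -> int | u = \sum_i c i *: s`_i}.
  apply: constructive_indefinite_description.
  by case: (Hb u) => c [e _]; exists c.
have js : (index v s < size s)%N by rewrite index_mem.
pose j := Ordinal js.
exists (fun u => sval (ex u) j); split.
  move=> a b.
  have -> : sval (ex (a + b)) = fun i => sval (ex a) i + sval (ex b) i.
    have e1 := svalP (ex (a + b)); apply: (U _ _ _ e1).
    by rewrite [a in LHS](svalP (ex a)) [b in LHS](svalP (ex b)) -big_split /=;
      apply: eq_bigr => i _; rewrite scalerDl.
  by [].
have -> : sval (ex v) = fun i => (i == j)%:R.
  have e1 := svalP (ex v); apply: (U _ _ _ e1).
  rewrite (bigD1 j) //= eqxx scale1r big1 ?addr0 => [|i /negPf ->]; last by rewrite scale0r.
  by rewrite /= nth_index.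
by rewrite eqxx.
Qed.
Lemma unit_basis r (A : 'M[int]_r) : A \in unitmx -> zbasis [seq row i A | i <- enum 'I_r].
Proof.
move=> uA u.
have e : size [seq row i A | i <- enum 'I_r] = r by rewrite size_map size_enum_ord.
have en (i : 'I_r) : [seq row i A | i <- enum 'I_r]`_i = row i A.
  by rewrite (nth_map i) ?size_enum_ord // nth_ord_enum.
move: e; generalize (size [seq row i A | i <- enum 'I_r]) => n e; subst n.
exists (fun i => (u *m invmx A) 0 i); split.
  under eq_bigr => i _ do rewrite en.
  by rewrite -mulmx_sum_row mulmxKV.
move=> c' e'; apply: functional_extensionality => i.
have : (\row_i c' i) *m A = u.
  rewrite mulmx_sum_row e'; apply: eq_bigr => l _; by rewrite mxE en.
by move=> <-; rewrite mulmxK // mxE.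
Qed.

Lemma NP0 r (v : 'rV[int]_r) : Nprop v -> primitive v.
Proof.
case: r v => [|r] v N.
  by case: (N 0 v); rewrite ?scale0r ?thinmx0.
have [L uL [R uR [d _ E]]] := int_Smith_normal_form v.
set k := L 0 0 * d`_0.
have LD (l : 'I_r.+1) : (L *m (\matrix_(i, j) (d`_i *+ (i == j :> nat)))) 0 l
    = if l == 0 then k else 0.
  rewrite !mxE big_ord1 mxE /k.
  case: (eqVneq l 0) => [->|nl] //=; rewrite eq_sym; move: nl; rewrite -val_eqE /= => /negPf ->; by rewrite mulr0n mulr0.
have ev : v = k *: row 0 R.
  apply/matrixP => i j; rewrite E !mxE (ord1 i) (bigD1 0) //= LD eqxx big1 ?addr0 //.
  by move=> l /negPf nl; rewrite LD nl mul0r.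
have ku : k \is a GRing.unit by case: (N _ _ ev) => ->; rewrite ?unitr1 ?unitrN1.
pose e := \row_(i < r.+1) (if i == 0 then k else 1).
pose R' := diag_mx e *m R.
have uR' : R' \in unitmx.
  rewrite unitmx_mul uR andbT unitmxE det_diag big_ord_recl big1 ?mulr1.
    by rewrite mxE eqxx.
  by move=> i _; rewrite mxE.
exists [seq row i R' | i <- enum 'I_r.+1]; split; first exact: unit_basis.
apply/mapP; exists 0; first by rewrite mem_enum.
apply/matrixP => i j; rewrite ev /R' mul_diag_mx !mxE eqxx.
by [].
Qed.

Theorem lemma3p1 (d r : nat) (S : Grp) (x : 'I_r -> S)
    (hd : (1 <= d)%N) (hS : free_solvable d x)
    (ab : S -> 'rV[int]_r)
    (ab_hom : forall a b : S, ab (gmul a b) = ab a + ab b)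
    (ab_surj : forall v : 'rV[int]_r, exists g : S, ab g = v)
    (ab_ker : forall g : S, ab g = 0 <-> in_derived 1 g)
    (h : S) (hnt : h <> gone S) :
  (verbally_closed (cyclic_sub h) <-> retract (cyclic_sub h)) /\
  (retract (cyclic_sub h) <-> primitive (ab h)).
Proof.
have VP : verbally_closed (cyclic_sub h) -> primitive (ab h).
  by move=> V; apply: NP0; exact: (VCN ab_hom ab_surj ab_ker hnt V).
have PR : primitive (ab h) -> retract (cyclic_sub h).
  by move=> P; apply: (P1R ab_hom); exact: P0P1.
split; split.
- by move=> V; exact: PR (VP V).
- exact: RVC.
- by move=> Rt; exact: VP (RVC Rt).
- exact: PR.
Qed.
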